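(* Assume Assumption 1 and Assumption 2 with $\delta>1/10$. For any distinct $u,u_1,u_2\in L$, as $n_L,n_R\to\infty$, $$\Pr[(u_1,u_2)\in E\mid S_L,S_R,\ (u,u_1)\in E,\ (u,u_2)\in E]=\frac{1}{1+\frac{M_{R2}^2}{M_{R3}M_{R1}}w_u}+o(1).$$
   Context: Model: left nodes $L$ ($|L|=n_L$), right nodes $R$ ($|R|=n_R$), weight sequences $S_L=(w_u)_{u\in L}$, $S_R=(w_v)_{v\in R}$ of positive reals; $M_{Lk}=\frac1{n_L}\sum_{u\in L}w_u^k$, $M_{Rk}=\frac1{n_R}\sum_{v\in R}w_v^k$. The random bipartite graph $G_b=(L\sqcup R,E_b)$ contains each edge $(u,v)$, $u\in L$, $v\in R$, independently with probability $\min\left(\frac{w_uw_v}{n_RM_{R1}},1\right)$. The projected graph is $G=(L,E)$ with $(u,u')\in E$ for distinct $u,u'\in L$ iff there is $z\in R$ with $(u,z),(u',z)\in E_b$. Assumption 1: $\frac{w_uw_v}{n_RM_{R1}}\le1$ for all $u\in L,v\in R$. Assumption 2 (parameter $\delta>0$), as $n_L,n_R\to\infty$: $\max(S_L\cup S_R)=O(n_R^{1/2-\delta})$, $\min S_L=\Omega(1)$, $M_{R2}=O(M_{R1}^2)$, $M_{R4}=O(n_R^{1-2\delta})$. *)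

(* Defs.v *)
From HB Require Import structures.
From mathcomp Require Import all_boot all_order all_algebra.
From mathcomp Require Import all_classical all_reals all_analysis.
Set Implicit Arguments. Unset Strict Implicit. Unset Printing Implicit Defensive.
Import Order.TTheory GRing.Theory Num.Theory.
Local Open Scope ring_scope.

Section Model.
Variable R : realType.

Definition moment (n : nat) (w : 'I_n -> R) (k : nat) : R :=
  (n%:R)^-1 * \sum_(i < n) w i ^+ k.

Definition edge_prob (nL nR : nat) (wL : 'I_nL -> R) (wR : 'I_nR -> R)
  (e : 'I_nL * 'I_nR) : R :=
  Num.min (wL e.1 * wR e.2 / (nR%:R * moment wR 1)) 1.

(* a realisation of the random bipartite graph G_b: the indicator of E_b *)
Definition config (nL nR : nat) := {ffun 'I_nL * 'I_nR -> bool}.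

Definition config_weight (nL nR : nat) (wL : 'I_nL -> R) (wR : 'I_nR -> R)
  (g : config nL nR) : R :=
  \prod_(e : 'I_nL * 'I_nR)
     (if g e then edge_prob wL wR e else 1 - edge_prob wL wR e).

Definition prob (nL nR : nat) (wL : 'I_nL -> R) (wR : 'I_nR -> R)
  (A : pred (config nL nR)) : R :=
  \sum_(g : config nL nR | A g) config_weight wL wR g.

Definition cond_prob (nL nR : nat) (wL : 'I_nL -> R) (wR : 'I_nR -> R)
  (A B : pred (config nL nR)) : R :=
  prob wL wR (predI A B) / prob wL wR B.

End Model.

(* edge of the projected graph G on L: distinct a, b with a common neighbour in R *)
Definition proj_edge (nL nR : nat) (g : config nL nR) (a b : 'I_nL) : bool :=
  (a != b) && [exists z : 'I_nR, g (a, z) && g (b, z)].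

(* Main.v *)
Require Import Defs.
From HB Require Import structures.
From mathcomp Require Import all_boot all_order all_algebra.
From mathcomp Require Import all_classical all_reals all_analysis.
From mathcomp Require Import ring lra.
Import Order.TTheory GRing.Theory Num.Theory.
Import numFieldNormedType.Exports.
Local Open Scope classical_set_scope.
Local Open Scope ring_scope.
Set Implicit Arguments. Unset Strict Implicit. Unset Printing Implicit Defensive.

Section Block.
Variables (R : realType) (nL nR : nat) (wL : 'I_nL -> R) (wR : 'I_nR -> R).
Variables (u u1 u2 : 'I_nL).
Hypotheses (hu1 : u != u1) (hu2 : u != u2) (h12 : u1 != u2).

Definition W (e : 'I_nL * 'I_nR) (b : bool) : R :=
  if b then edge_prob wL wR e else 1 - edge_prob wL wR e.

Definition T3 := (bool * bool * bool)%type.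

Definition ind (i : 'I_nL) (t : T3) (b : bool) : R :=
  (if i == u then (b == t.1.1)%:R else 1) * (if i == u1 then (b == t.1.2)%:R else 1)
  * (if i == u2 then (b == t.2)%:R else 1).

Lemma Eu1 : (u == u1) = false. Proof. exact: negbTE. Qed.
Lemma Eu2 : (u == u2) = false. Proof. exact: negbTE. Qed.
Lemma E12 : (u1 == u2) = false. Proof. exact: negbTE. Qed.
Lemma Eu1' : (u1 == u) = false. Proof. by rewrite eq_sym Eu1. Qed.
Lemma Eu2' : (u2 == u) = false. Proof. by rewrite eq_sym Eu2. Qed.
Lemma E12' : (u2 == u1) = false. Proof. by rewrite eq_sym E12. Qed.
Definition Es := (Eu1, Eu2, E12, Eu1', Eu2', E12', eqxx).

Lemma prod3 (h : 'I_nL -> R) :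
  (forall i, i != u -> i != u1 -> i != u2 -> h i = 1) ->
  \prod_i h i = h u * h u1 * h u2.
Proof.
move=> H; rewrite (bigD1 u) //= (bigD1 u1) /=; last by rewrite eq_sym hu1.
rewrite (bigD1 u2) /=; last by rewrite [u2 == u]eq_sym [u2 == u1]eq_sym hu2 h12.
rewrite big1 ?mulr1 ?mulrA //.
by move=> i /andP[/andP[Hu Hu1] Hu2]; apply: H.
Qed.

Lemma sum_ind_pt (T : finType) (F : T -> R) (t0 : T) :
  \sum_t F t * (t == t0)%:R = F t0.
Proof.
rewrite (bigD1 t0) //= eqxx mulr1 big1 ?addr0 // => t /negbTE ->; by rewrite mulr0.
Qed.

Lemma prod_ind (t : T3) (b : 'I_nL -> bool) :
  \prod_i ind i t (b i) = (t == (b u, b u1, b u2))%:R.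
Proof.
rewrite prod3; last by move=> i Hu Hu1 Hu2; rewrite /ind (negbTE Hu) (negbTE Hu1) (negbTE Hu2) !mulr1.
rewrite /ind !Es !mulr1 !mul1r.
case: t => [[x y] z] /=.
rewrite !xpair_eqE; by case: x; case: y; case: z; case: (b u); case: (b u1); case: (b u2); rewrite /= ?mulr1 ?mul1r ?mulr0 ?mul0r.
Qed.

Lemma sumW e : W e true + W e false = 1.
Proof. rewrite /W; ring. Qed.

Lemma block (F : 'I_nR -> T3 -> R) :
  \sum_(g : config nL nR) config_weight wL wR g *
      \prod_z F z (g (u, z), g (u1, z), g (u2, z)) =
  \prod_z \sum_(t : T3) F z t * (W (u, z) t.1.1 * W (u1, z) t.1.2 * W (u2, z) t.2).
Proof.
have step1 : forall g : config nL nR, \prod_z F z (g (u, z), g (u1, z), g (u2, z)) =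
   \sum_(be : {ffun 'I_nR -> T3}) \prod_z (F z (be z) * \prod_i ind i (be z) (g (i, z))).
  move=> g; rewrite -(bigA_distr_bigA (fun z t => F z t * \prod_i ind i t (g (i, z)))) /=; apply: eq_bigr => z _.
  under eq_bigr do rewrite prod_ind.
  by rewrite sum_ind_pt.
rewrite (eq_bigr _ (fun g _ => congr1 (fun x => config_weight wL wR g * x) (step1 g))) /=. under eq_bigr do rewrite big_distrr /=.
rewrite exchange_big /=.
have step2 : forall be : {ffun 'I_nR -> T3},
  \sum_(g : config nL nR) config_weight wL wR g *
     \prod_z (F z (be z) * \prod_i ind i (be z) (g (i, z))) =
  \prod_z (F z (be z) * (W (u, z) (be z).1.1 * W (u1, z) (be z).1.2 * W (u2, z) (be z).2)).
  move=> be.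
  have E1 : forall g : config nL nR, config_weight wL wR g *
     \prod_z (F z (be z) * \prod_i ind i (be z) (g (i, z))) =
     (\prod_z F z (be z)) * \prod_(e : 'I_nL * 'I_nR) (W e (g e) * ind e.1 (be e.2) (g e)).
    move=> g; rewrite big_split /= mulrCA; congr (_ * _).
    rewrite /config_weight [in RHS]big_split /=; congr (_ * _).
    rewrite exchange_big (pair_bigA _ (fun i z => ind i (be z) (g (i, z)))) /=.
    by apply: eq_bigr => -[i z] _.
  rewrite (eq_bigr _ (fun g _ => E1 g)).
  rewrite -big_distrr /= -(bigA_distr_bigA (fun e b => W e b * ind e.1 (be e.2) b)) /=.
  rewrite big_split /=; congr (_ * _).
  rewrite -(pair_bigA _ (fun i z => \sum_b W (i, z) b * ind i (be z) b)) /= exchange_big /=.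
  apply: eq_bigr => z _.
  rewrite prod3; last first.
    move=> i /negbTE Hu /negbTE Hu1 /negbTE Hu2.
    by rewrite big_bool /= /ind Hu Hu1 Hu2 !mulr1 sumW.
  rewrite !big_bool /ind /= !Es !mulr1 !mul1r.
  by case: (be z) => [[x y] w] /=; case: x; case: y; case: w => /=; rewrite ?mulr0 ?mulr1 ?addr0 ?add0r.
under eq_bigr do rewrite step2.
by rewrite -(bigA_distr_bigA (fun z t => F z t * (W (u, z) t.1.1 * W (u1, z) t.1.2 * W (u2, z) t.2))).
Qed.


Lemma sum_pair (A B : finType) (G : A * B -> R) :
  \sum_t G t = \sum_(a : A) \sum_(b : B) G (a, b).
Proof. by rewrite (pair_bigA _ (fun a b => G (a, b))) /=; apply: eq_bigr => -[]. Qed.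

Lemma sumT3 (F : T3 -> R) : \sum_t F t =
  \sum_(x : bool) \sum_(y : bool) \sum_(w : bool) F (x, y, w).
Proof.
rewrite (sum_pair (A := (bool * bool)%type) (B := bool) F) (sum_pair (fun ab => \sum_w F (ab, w))).
done.
Qed.

Definition WWW z (t : T3) := W (u, z) t.1.1 * W (u1, z) t.1.2 * W (u2, z) t.2.

Lemma prob_sum (P : pred (config nL nR)) :
  prob wL wR P = \sum_g config_weight wL wR g * (P g)%:R.
Proof.
rewrite /prob [RHS](bigID P) /= [X in _ + X]big1 ?addr0.
  by apply: eq_bigr => g ->; rewrite mulr1.
by move=> g /negbTE ->; rewrite mulr0.
Qed.

Lemma forall_R (phi : 'I_nR -> bool) : ([forall z, phi z])%:R = \prod_z (phi z)%:R :> R.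
Proof.
case: (boolP [forall z, phi z]) => [/forallP H | /forallPn [z Hz]].
  by rewrite big1 // => z _; rewrite H.
by rewrite (bigD1 z) //= (negbTE Hz) mul0r.
Qed.

Lemma prob_forall (P : pred (config nL nR)) (phi : 'I_nR -> T3 -> bool) :
  (forall g, P g = [forall z, phi z (g (u, z), g (u1, z), g (u2, z))]) ->
  prob wL wR P = \prod_z \sum_t (phi z t)%:R * WWW z t.
Proof.
move=> HP; rewrite prob_sum.
rewrite (eq_bigr (fun g => config_weight wL wR g *
   \prod_z (fun z t => (phi z t)%:R) z (g (u, z), g (u1, z), g (u2, z)))); last first.
  by move=> g _; rewrite HP forall_R.
exact: (block (fun z t => (phi z t)%:R)).
Qed.


Definition pu z := edge_prob wL wR (u, z).
Definition pu1 z := edge_prob wL wR (u1, z).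
Definition pu2 z := edge_prob wL wR (u2, z).

Lemma zA z : \sum_t (~~ (t.1.1 && t.1.2))%:R * WWW z t = 1 - pu z * pu1 z.
Proof. rewrite sumT3 !big_bool /WWW /W /pu /pu1 /=; ring. Qed.
Lemma zB z : \sum_t (~~ (t.1.1 && t.2))%:R * WWW z t = 1 - pu z * pu2 z.
Proof. rewrite sumT3 !big_bool /WWW /W /pu /pu2 /=; ring. Qed.
Lemma zAB z : \sum_t (~~ (t.1.1 && t.1.2) && ~~ (t.1.1 && t.2))%:R * WWW z t =
  1 - pu z * pu1 z - pu z * pu2 z + pu z * pu1 z * pu2 z.
Proof. rewrite sumT3 !big_bool /WWW /W /pu /pu1 /pu2 /=; ring. Qed.
Lemma zT z : \sum_t (~~ (t.1.1 && t.1.2 && t.2))%:R * WWW z t = 1 - pu z * pu1 z * pu2 z.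
Proof. rewrite sumT3 !big_bool /WWW /W /pu /pu1 /pu2 /=; ring. Qed.
Lemma z1 z : \sum_t (true)%:R * WWW z t = 1.
Proof. rewrite sumT3 !big_bool /WWW /W /=; ring. Qed.


Hypotheses (wLge0 : forall i, 0 <= wL i) (wRge0 : forall j, 0 <= wR j).

Lemma ep_ge0 e : 0 <= edge_prob wL wR e.
Proof.
rewrite /edge_prob le_min ler01 andbT; apply: divr_ge0; first exact: mulr_ge0.
apply: mulr_ge0 => //; rewrite /moment; apply: mulr_ge0 => //.
by apply: sumr_ge0 => i _; rewrite expr1.
Qed.

Lemma ep_le1 e : edge_prob wL wR e <= 1.
Proof. by rewrite /edge_prob ge_min lexx orbT. Qed.

Lemma W_ge0 e b : 0 <= W e b.
Proof. by rewrite /W; case: b; [exact: ep_ge0 | rewrite subr_ge0 ep_le1]. Qed.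

Lemma cw_ge0 g : 0 <= config_weight wL wR g.
Proof. by apply: prodr_ge0 => e _; exact: W_ge0. Qed.

Lemma prob_le (P Q : pred (config nL nR)) : (forall g, P g -> Q g) ->
  prob wL wR P <= prob wL wR Q.
Proof.
move=> H; rewrite !prob_sum; apply: ler_sum => g _; apply: ler_wpM2l; first exact: cw_ge0.
by case: (boolP (P g)) => [/H -> | _] //=; case: (Q g).
Qed.

Lemma prob_ge0 (P : pred (config nL nR)) : 0 <= prob wL wR P.
Proof. by apply: sumr_ge0 => g _; exact: cw_ge0. Qed.

Lemma prob_split (P Q : pred (config nL nR)) :
  prob wL wR P = prob wL wR (fun g => P g && Q g) + prob wL wR (fun g => P g && ~~ Q g).
Proof.
rewrite !prob_sum -big_split /=; apply: eq_bigr => g _.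
by case: (P g); case: (Q g) => /=; ring.
Qed.

Lemma union_bound (I : finType) (P : pred (config nL nR)) (Q : I -> pred (config nL nR)) :
  (forall g, P g -> exists i, Q i g) -> prob wL wR P <= \sum_i prob wL wR (Q i).
Proof.
move=> H; rewrite prob_sum.
under [X in _ <= X]eq_bigr do rewrite prob_sum.
rewrite exchange_big /=; apply: ler_sum => g _.
rewrite -big_distrr /=; apply: ler_wpM2l; first exact: cw_ge0.
case: (boolP (P g)) => [Pg | _]; last by apply: sumr_ge0 => i _; case: (Q i g).
have [i Qi] := H g Pg.
rewrite (bigD1 i) //= Qi -[X in X <= _]addr0 lerD2l.
by apply: sumr_ge0 => j _; case: (Q j g).
Qed.

Definition eA (g : config nL nR) := [exists z, g (u, z) && g (u1, z)].
Definition eB (g : config nL nR) := [exists z, g (u, z) && g (u2, z)].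
Definition eC (g : config nL nR) := [exists z, g (u1, z) && g (u2, z)].
Definition eT (g : config nL nR) := [exists z, [&& g (u, z), g (u1, z) & g (u2, z)]].

Lemma forall_andb (T : finType) (P Q : pred T) :
  [forall x, P x && Q x] = [forall x, P x] && [forall x, Q x].
Proof.
apply/forallP/andP => [H | [/forallP H1 /forallP H2] x]; last by rewrite H1 H2.
by split; apply/forallP => x; case/andP: (H x).
Qed.

Lemma prob_all : prob wL wR (fun _ => true) = 1.
Proof.
rewrite (@prob_forall _ (fun _ _ => true)); last by move=> g; apply/esym/forallP.
by apply: big1 => z _; exact: z1.
Qed.

Lemma prob_nA : prob wL wR (fun g => ~~ eA g) = \prod_z (1 - pu z * pu1 z).
Proof.
rewrite (@prob_forall _ (fun _ t => ~~ (t.1.1 && t.1.2))); last by move=> g; rewrite /eA negb_exists.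
by apply: eq_bigr => z _; exact: zA.
Qed.

Lemma prob_nB : prob wL wR (fun g => ~~ eB g) = \prod_z (1 - pu z * pu2 z).
Proof.
rewrite (@prob_forall _ (fun _ t => ~~ (t.1.1 && t.2))); last by move=> g; rewrite /eB negb_exists.
by apply: eq_bigr => z _; exact: zB.
Qed.

Lemma prob_nAB : prob wL wR (fun g => ~~ eA g && ~~ eB g) =
  \prod_z (1 - pu z * pu1 z - pu z * pu2 z + pu z * pu1 z * pu2 z).
Proof.
rewrite (@prob_forall _ (fun _ t => ~~ (t.1.1 && t.1.2) && ~~ (t.1.1 && t.2))); last first.
  by move=> g; rewrite /eA /eB !negb_exists forall_andb.
by apply: eq_bigr => z _; exact: zAB.
Qed.

Lemma prob_nT : prob wL wR (fun g => ~~ eT g) = \prod_z (1 - pu z * pu1 z * pu2 z).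
Proof.
rewrite (@prob_forall _ (fun _ t => ~~ (t.1.1 && t.1.2 && t.2))); last first.
  by move=> g; rewrite /eT negb_exists; apply: eq_forallb => z; rewrite andbA.
by apply: eq_bigr => z _; exact: zT.
Qed.

Lemma prob_compl (P : pred (config nL nR)) :
  prob wL wR P = 1 - prob wL wR (fun g => ~~ P g).
Proof.
by rewrite -prob_all (prob_split (fun _ => true) P) /= addrK.
Qed.

Lemma prob_AB : prob wL wR (fun g => eA g && eB g) =
  1 - \prod_z (1 - pu z * pu1 z) - \prod_z (1 - pu z * pu2 z) +
  \prod_z (1 - pu z * pu1 z - pu z * pu2 z + pu z * pu1 z * pu2 z).
Proof.
rewrite -prob_nA -prob_nB -prob_nAB -prob_all !prob_sum -!sumrB -big_split /=.
apply: eq_bigr => g _; by case: (eA g); case: (eB g) => /=; ring.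
Qed.

Lemma prob_T : prob wL wR eT = 1 - \prod_z (1 - pu z * pu1 z * pu2 z).
Proof. by rewrite prob_compl prob_nT. Qed.


Definition I3 := ('I_nR * 'I_nR * 'I_nR)%type.

Definition litphi (i : I3) z (t : T3) : bool :=
  [&& (z == i.1.1) ==> (t.1.1 && t.1.2), (z == i.1.2) ==> (t.1.1 && t.2)
    & (z == i.2) ==> (t.1.2 && t.2)].

Definition Lit (i : I3) (g : config nL nR) : bool :=
  [&& i.1.1 != i.1.2, i.1.1 != i.2, i.1.2 != i.2 &
      [forall z, litphi i z (g (u, z), g (u1, z), g (u2, z))]].

Lemma prod_if1 (a : 'I_nR) (c : 'I_nR -> R) : \prod_z (if z == a then c z else 1) = c a.
Proof. by rewrite (bigD1 a) //= eqxx big1 ?mulr1 // => z /negbTE ->. Qed.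

Lemma prob_Lit (i : I3) : prob wL wR (Lit i) <=
  pu i.1.1 * pu1 i.1.1 * (pu i.1.2 * pu2 i.1.2) * (pu1 i.2 * pu2 i.2).
Proof.
have pge0 z : 0 <= pu z /\ 0 <= pu1 z /\ 0 <= pu2 z by split; [|split]; exact: ep_ge0.
case: i => [[a b] c] /=.
case: (boolP [&& a != b, a != c & b != c]) => [/and3P[ab ac bc] | nd]; last first.
  rewrite (_ : prob wL wR (Lit (a, b, c)) = 0).
    have [? [? ?]] := pge0 a; have [? [? ?]] := pge0 b; have [? [? ?]] := pge0 c.
    by rewrite !mulr_ge0.
  rewrite prob_sum big1 // => g _.
  by move: nd; rewrite /Lit /=; case: (a != b); case: (a != c); case: (b != c); rewrite /= ?mulr0.
rewrite (@prob_forall _ (litphi (a, b, c))); last by move=> g; rewrite /Lit /= ab ac bc.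
rewrite (eq_bigr (fun z => (if z == a then pu z * pu1 z else 1) *
   (if z == b then pu z * pu2 z else 1) * (if z == c then pu1 z * pu2 z else 1))).
  by rewrite !big_split /= !prod_if1.
move=> z _; rewrite /litphi /=.
have [-> | za] := eqVneq z a.
  rewrite ?eqxx (negbTE ab) (negbTE ac) sumT3 !big_bool /WWW /W /pu /pu1 /pu2 /=; ring.
have [-> | zb] := eqVneq z b.
  rewrite ?eqxx (negbTE bc) sumT3 !big_bool /WWW /W /pu /pu1 /pu2 /=; ring.
have [-> | zc] := eqVneq z c.
  rewrite ?eqxx sumT3 !big_bool /WWW /W /pu /pu1 /pu2 /=; ring.
rewrite ?(negbTE za) ?(negbTE zb) ?(negbTE zc) sumT3 !big_bool /WWW /W /pu /pu1 /pu2 /=; ring.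
Qed.

Lemma N_ge : prob wL wR eT <= prob wL wR (fun g => eC g && (eA g && eB g)).
Proof.
apply: prob_le => g /existsP [z /and3P[a b c]].
by apply/and3P; split; apply/existsP; exists z; rewrite ?a ?b ?c.
Qed.

Lemma N_le : prob wL wR (fun g => eC g && (eA g && eB g)) <=
  prob wL wR eT + (\sum_z pu z * pu1 z) * (\sum_z pu z * pu2 z) * (\sum_z pu1 z * pu2 z).
Proof.
rewrite (prob_split _ eT); apply: lerD.
  by apply: prob_le => g /andP[].
apply: le_trans (union_bound (Q := Lit) _) _.
  move=> g /andP[/andP[/existsP[z3 /andP[b3 c3]] /andP[/existsP[z1 /andP[a1 b1]]
         /existsP[z2 /andP[a2 c2]]]] nT].
  exists (z1, z2, z3); rewrite /Lit /=.
  have nt z : g (u, z) -> g (u1, z) -> g (u2, z) -> False.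
    by move=> x y w; move/negP: nT; apply; apply/existsP; exists z; rewrite x y w.
  apply/and4P; split.
  - by apply/negP => /eqP E; subst z2; exact: (nt z1).
  - by apply/negP => /eqP E; subst z3; exact: (nt z1).
  - by apply/negP => /eqP E; subst z3; exact: (nt z2).
  apply/forallP => z; rewrite /litphi /=.
  apply/and3P; split; apply/implyP => /eqP ->; rewrite ?a1 ?b1 ?a2 ?c2 ?b3 ?c3 //.
apply: le_trans (ler_sum _ (fun i _ => prob_Lit i)) _.
rewrite (sum_pair (A := ('I_nR * 'I_nR)%type) (B := 'I_nR)) /=.
rewrite (eq_bigr (fun ab => (pu ab.1 * pu1 ab.1 * (pu ab.2 * pu2 ab.2)) * \sum_z (pu1 z * pu2 z))); last first.
  by move=> ab _; rewrite big_distrr.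
rewrite -big_distrl /= sum_pair /=.
rewrite (eq_bigr (fun a => (pu a * pu1 a) * \sum_b (pu b * pu2 b))); last first.
  by move=> a _; rewrite big_distrr.
by rewrite -big_distrl.
Qed.

End Block.

Section Ineq.
Variable R : realType.

Lemma prod_lb (I : Type) (r : seq I) (x : I -> R) :
  (forall i, 0 <= x i <= 1) ->
  1 - \sum_(i <- r) x i <= \prod_(i <- r) (1 - x i) /\
  \prod_(i <- r) (1 - x i) <= 1 - \sum_(i <- r) x i + (\sum_(i <- r) x i) ^+ 2 /\
  0 <= \prod_(i <- r) (1 - x i) /\ 0 <= \sum_(i <- r) x i.
Proof.
move=> H; elim: r => [|a r [IH1 [IH2 [IH3 IH4]]]]; first by rewrite !big_nil; lra.
rewrite !big_cons; have /andP[h1 h2] := H a.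
set P := \prod_(j <- r) _ in IH1 IH2 IH3 *; set S := \sum_(j <- r) _ in IH1 IH2 IH4 *.
split; first nra.
split; first nra.
split; nra.
Qed.

Lemma prod_diff (I : Type) (r : seq I) (y y' : I -> R) :
  (forall i, 0 <= y' i <= y i) -> (forall i, y i <= 1) ->
  let P := \prod_(i <- r) y i in let P' := \prod_(i <- r) y' i in
  let D := \sum_(i <- r) (y i - y' i) in
  [/\ 0 <= P' <= P, P <= 1, P - P' <= D, (1 + D) * P' <= P & 0 <= D].
Proof.
move=> H1 H2; elim: r => [|a r]; first by rewrite /= !big_nil; split; lra.
rewrite /= !big_cons.
set P := \prod_(j <- r) y j; set P' := \prod_(j <- r) y' j; set D := \sum_(j <- r) _.
move=> [/andP[h1 h2] h3 h4 h5 h6].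
have /andP[a1 a2] := H1 a; have a3 := H2 a.
split.
- apply/andP; split; first nra. nra.
- nra.
- have t1 : 0 <= (1 - y a) * (P - P') by apply: mulr_ge0; lra.
  have t2 : 0 <= (y a - y' a) * (1 - P') by apply: mulr_ge0; lra.
  nra.
- have t1 : 0 <= P' * ((y a - y' a) * (1 + D - y' a)).
    by apply: mulr_ge0; [lra | apply: mulr_ge0; lra].
  have t2 : y a * ((1 + D) * P') <= y a * P by apply: ler_wpM2l; lra.
  nra.
- nra.
Qed.


Lemma prod_lbF n (x : 'I_n -> R) :
  (forall i, 0 <= x i <= 1) ->
  1 - \sum_i x i <= \prod_i (1 - x i) /\
  \prod_i (1 - x i) <= 1 - \sum_i x i + (\sum_i x i) ^+ 2 /\
  0 <= \prod_i (1 - x i) /\ 0 <= \sum_i x i.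
Proof. exact: prod_lb. Qed.

Lemma prod_diffF n (y y' : 'I_n -> R) :
  (forall i, 0 <= y' i <= y i) -> (forall i, y i <= 1) ->
  [/\ 0 <= \prod_i y' i <= \prod_i y i, \prod_i y i <= 1,
     \prod_i y i - \prod_i y' i <= \sum_i (y i - y' i),
     (1 + \sum_i (y i - y' i)) * \prod_i y' i <= \prod_i y i & 0 <= \sum_i (y i - y' i)].
Proof. exact: prod_diff. Qed.

Lemma ratio_bound (N Dn t D e : R) :
  0 < D -> 0 <= t <= D -> 0 <= e <= 1/4 ->
  `|N - t| <= e * D -> `|Dn - D| <= e * D ->
  `|N / Dn - t / D| <= 4 * e.
Proof.
move=> D0 /andP[t0 tD] /andP[e0 e1] hN hD.
have /ler_normlP[h1 h2] := hN; have /ler_normlP[h3 h4] := hD.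
have Dn0 : 0 < Dn by nra.
have -> : N / Dn - t / D = (N * D - t * Dn) / (Dn * D) by field; lra.
rewrite normrM normfV (ger0_norm (x := Dn * D)); last by apply: mulr_ge0; lra.
rewrite ler_pdivrMr; last by apply: mulr_gt0.
have ->: N * D - t * Dn = (N - t) * D - t * (Dn - D) by ring.
apply: le_trans (ler_normD _ _) _; rewrite normrM normrN normrM (gtr0_norm D0) (ger0_norm t0).
have k1 : `|N - t| * D <= e * D * D by apply: ler_wpM2r; [lra | exact: hN].
have k2 : t * `|Dn - D| <= D * (e * D).
  apply: (@le_trans _ _ (D * `|Dn - D|)); first by apply: ler_wpM2r; [exact: normr_ge0 | lra].
  by apply: ler_wpM2l; [lra | exact: hD].
have k3 : (1 - e) * D <= Dn by lra.
have k4 : 0 <= e * D by nra.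
have k5 : e * D * ((1 - e) * D) <= e * D * Dn by apply: ler_wpM2l.
have k6 : e * (e * D * D) <= (1/4) * (e * D * D) by apply: ler_wpM2r; [nra | lra].
have -> : 4 * e * (Dn * D) = 4 * (e * D * Dn) by ring.
have : e * D * ((1 - e) * D) = e * D * D - e * (e * D * D) by ring.
nra.
Qed.

Lemma final_alg (al be ga ta si m A B De PT Nn : R) :
  0 <= al -> 0 <= be -> 0 <= ga -> 0 <= m -> 0 < ta -> 0 <= si -> si <= m * ta ->
  ta <= m * ga -> al + be + ga + m <= 1/4 ->
  al - al ^+ 2 <= A <= al -> be - be ^+ 2 <= B <= be ->
  (ta - si) * ((1 - A) * (1 - B)) <= De <= ta - si ->
  ta - ta ^+ 2 <= PT <= ta -> PT <= Nn <= PT + al * be * ga ->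
  `|Nn / (A * B + De) - ta / (ta + al * be)| <= 4 * (al + be + ga + m).
Proof.
move=> a0 b0 g0 m0 t0 s0 sm tm he /andP[A1 A2] /andP[B1 B2] /andP[D1 D2]
  /andP[P1 P2] /andP[N1 N2].
set e := al + be + ga + m.
have eE : e = al + be + ga + m by [].
clearbody e.
have ab0 : 0 <= al * be by apply: mulr_ge0.
apply: ratio_bound.
- lra.
- apply/andP; split; lra.
- apply/andP; split; lra.
- apply/ler_normlP; split.
  + have tg : m * ga <= ga.
      have : 0 <= (1 - m) * ga by apply: mulr_ge0; lra.
      nra.
    have : ta ^+ 2 <= e * ta by rewrite expr2; apply: ler_wpM2r; lra.
    nra.
  + have : al * be * ga <= al * be * e by apply: ler_wpM2l; lra.
    nra.
- have A0 : 0 <= A by nra.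
  have B0 : 0 <= B by nra.
  have AB1 : A * B <= al * be by apply: ler_pM.
  have AB2 : al * be * (1 - al - be) <= A * B.
    have : (al - al ^+ 2) * (be - be ^+ 2) <= A * B by apply: ler_pM; nra.
    have : 0 <= al * be * (al * be) by nra.
    rewrite !expr2; nra.
  have DD : ta * (1 - m - al - be) <= De.
    have h1 : (1 - al) * (1 - be) <= (1 - A) * (1 - B) by apply: ler_pM; lra.
    have h2 : (ta - si) * ((1 - al) * (1 - be)) <= (ta - si) * ((1 - A) * (1 - B)).
      by apply: ler_wpM2l; nra.
    have h3 : 0 <= ta * (al * be) by nra.
    nra.
  apply/ler_normlP; split; nra.
Qed.


Lemma final_prod n (p q r : 'I_n -> R) (m Nn : R) :
  (forall z, 0 <= p z <= 1) -> (forall z, 0 <= q z <= 1) -> (forall z, 0 <= r z <= 1) ->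
  (forall z, p z <= m) -> 0 <= m ->
  0 < \sum_z p z * q z * r z ->
  (\sum_z p z * q z) + (\sum_z p z * r z) + (\sum_z q z * r z) + m <= 1/4 ->
  1 - \prod_z (1 - p z * q z * r z) <= Nn <=
    1 - \prod_z (1 - p z * q z * r z) +
    (\sum_z p z * q z) * (\sum_z p z * r z) * (\sum_z q z * r z) ->
  `|Nn / (1 - \prod_z (1 - p z * q z) - \prod_z (1 - p z * r z) +
          \prod_z (1 - p z * q z - p z * r z + p z * q z * r z))
    - (\sum_z p z * q z * r z) /
      ((\sum_z p z * q z * r z) + (\sum_z p z * q z) * (\sum_z p z * r z))|
  <= 4 * ((\sum_z p z * q z) + (\sum_z p z * r z) + (\sum_z q z * r z) + m).
Proof.
move=> Hp Hq Hr Hm m0 t0 he HN.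
have Hpq z : 0 <= p z * q z <= 1.
  have /andP[? ?] := Hp z; have /andP[? ?] := Hq z; apply/andP; split; nra.
have Hpr z : 0 <= p z * r z <= 1.
  have /andP[? ?] := Hp z; have /andP[? ?] := Hr z; apply/andP; split; nra.
have Hpqr z : 0 <= p z * q z * r z <= 1.
  have /andP[? ?] := Hpq z; have /andP[? ?] := Hr z; apply/andP; split; nra.
have [A1 [A2 [A3 A4]]] := prod_lbF Hpq.
have [B1 [B2 [B3 B4]]] := prod_lbF Hpr.
have [T1 [T2 [T3 T4]]] := prod_lbF Hpqr.
have Hy z : 0 <= (1 - p z * q z) * (1 - p z * r z) <= 1 - p z * q z - p z * r z + p z * q z * r z.
  have /andP[? ?] := Hp z; have /andP[? ?] := Hq z; have /andP[? ?] := Hr z.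
  have /andP[? ?] := Hpq z; have /andP[? ?] := Hpr z; have /andP[? ?] := Hpqr z.
  apply/andP; split; first by apply: mulr_ge0; lra.
  have : 0 <= (p z * q z * r z) * (1 - p z) by apply: mulr_ge0; lra.
  nra.
have Hy1 z : 1 - p z * q z - p z * r z + p z * q z * r z <= 1.
  have /andP[? ?] := Hp z; have /andP[? ?] := Hq z; have /andP[? ?] := Hr z.
  have : 0 <= (p z * r z) * (1 - q z) by apply: mulr_ge0; nra.
  nra.
have [/andP[P1 P2] P3 P4 P5 P6] := prod_diffF Hy Hy1.
move: P1 P2 P3 P4 P5 P6.
rewrite big_split /=.
set X := \prod_i (1 - p i * q i) in A1 A2 A3 *.
set Y := \prod_i (1 - p i * r i) in B1 B2 B3 *.
set Py := \prod_i (1 - p i * q i - p i * r i + p i * q i * r i).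
rewrite (eq_bigr (fun z => p z * q z * r z - p z * (p z * q z * r z))); last first.
  by move=> z _; ring.
rewrite sumrB.
set ta := \sum_i p i * q i * r i in t0 T1 T2 T3 T4 HN *.
set si := \sum_i p i * (p i * q i * r i).
move=> P1 P2 P3 P4 P5 P6.
have -> : 1 - X - Y + Py = (1 - X) * (1 - Y) + (Py - X * Y) by ring.
have si0 : 0 <= si by apply: sumr_ge0 => z _; have /andP[? ?] := Hp z; have /andP[? ?] := Hpqr z; nra.
have sim : si <= m * ta.
  rewrite /ta big_distrr; apply: ler_sum => z _.
  by apply: ler_wpM2r; [have /andP[] := Hpqr z | exact: Hm].
have tm : ta <= m * \sum_z q z * r z.
  rewrite big_distrr; apply: ler_sum => z _.
  have -> : p z * q z * r z = p z * (q z * r z) by ring.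
  apply: ler_wpM2r; last exact: Hm.
  have /andP[? ?] := Hq z; have /andP[? ?] := Hr z; nra.
have g0 : 0 <= \sum_z q z * r z.
  by apply: sumr_ge0 => z _; have /andP[? ?] := Hq z; have /andP[? ?] := Hr z; nra.
apply: (final_alg (si := si) (PT := 1 - \prod_z (1 - p z * q z * r z))) => //.
- apply/andP; split; lra.
- apply/andP; split; lra.
- apply/andP; split; last lra.
  have -> : (1 - (1 - X)) * (1 - (1 - Y)) = X * Y by ring.
  nra.
- apply/andP; split; lra.
Qed.

End Ineq.

Section Fixed.
Variables (R : realType) (nL nR : nat) (wL : 'I_nL -> R) (wR : 'I_nR -> R).
Variables (u u1 u2 : 'I_nL).
Hypotheses (hu1 : u != u1) (hu2 : u != u2) (h12 : u1 != u2).
Hypotheses (n0 : (0 < nR)%N) (wLp : forall i, 0 < wL i) (wRp : forall j, 0 < wR j).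
Hypothesis (As1 : forall i j, wL i * wR j / (nR%:R * moment wR 1) <= 1).

Let wLge0 i : 0 <= wL i. Proof. exact: ltW. Qed.
Let wRge0 j : 0 <= wR j. Proof. exact: ltW. Qed.

Definition S k := \sum_z wR z ^+ k.

Lemma S_gt0 k : 0 < S k.
Proof.
rewrite /S (bigD1 (Ordinal n0)) //=; apply: ltr_wpDr; last exact: exprn_gt0.
by apply: sumr_ge0 => z _; apply: exprn_ge0.
Qed.

Lemma momentE k : moment wR k = nR%:R^-1 * S k.
Proof. by []. Qed.

Lemma nR_gt0 : 0 < nR%:R :> R.
Proof. by rewrite ltr0n. Qed.

Lemma puE (v : 'I_nL) z : edge_prob wL wR (v, z) = wL v * wR z / S 1.
Proof.
rewrite /edge_prob /= min_l; last exact: As1.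
rewrite momentE mulrA mulfV ?mul1r //; exact: lt0r_neq0 nR_gt0.
Qed.


Lemma ep01 e : 0 <= edge_prob wL wR e <= 1.
Proof. by apply/andP; split; [exact: ep_ge0 | exact: ep_le1]. Qed.

Lemma pu_gt0 (v : 'I_nL) z : 0 < edge_prob wL wR (v, z).
Proof.
rewrite puE; apply: divr_gt0; first exact: mulr_gt0.
exact: S_gt0.
Qed.

Lemma fixedN (eta : R) : 0 < eta -> eta <= 1/8 ->
  (forall z, pu wL wR u z <= eta) ->
  \sum_z pu wL wR u z * pu1 wL wR u1 z <= eta ^+ 2 ->
  \sum_z pu wL wR u z * pu2 wL wR u2 z <= eta ^+ 2 ->
  \sum_z pu1 wL wR u1 z * pu2 wL wR u2 z <= eta ^+ 2 ->
  `|cond_prob wL wR (fun g => proj_edge g u1 u2)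
       (fun g => proj_edge g u u1 && proj_edge g u u2)
    - (1 + moment wR 2 ^+ 2 / (moment wR 3 * moment wR 1) * wL u)^-1| <= 6 * eta.
Proof.
move=> e0 e1 hp ha hb hg.
have Ec : cond_prob wL wR (fun g => proj_edge g u1 u2)
       (fun g => proj_edge g u u1 && proj_edge g u u2) =
    prob wL wR (fun g => eC u1 u2 g && (eA u u1 g && eB u u2 g)) /
    prob wL wR (fun g => eA u u1 g && eB u u2 g).
  rewrite /cond_prob /prob; congr (_ / _); apply: eq_bigl => g;
  by rewrite /= /proj_edge /eA /eB /eC ?hu1 ?hu2 ?h12.
set ta := \sum_z pu wL wR u z * pu1 wL wR u1 z * pu2 wL wR u2 z.
set al := \sum_z pu wL wR u z * pu1 wL wR u1 z.
set be := \sum_z pu wL wR u z * pu2 wL wR u2 z.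
have Et : (1 + moment wR 2 ^+ 2 / (moment wR 3 * moment wR 1) * wL u)^-1 = ta / (ta + al * be).
  have taE : ta = wL u * wL u1 * wL u2 / S 1 ^+ 3 * S 3.
    rewrite /ta -[S 3]/(\sum_z wR z ^+ 3) big_distrr /=; apply: eq_bigr => y _.
    rewrite /pu /pu1 /pu2 !puE; field; exact: lt0r_neq0 (S_gt0 _).
  have alE : al = wL u * wL u1 / S 1 ^+ 2 * S 2.
    rewrite /al -[S 2]/(\sum_z wR z ^+ 2) big_distrr /=; apply: eq_bigr => y _.
    rewrite /pu /pu1 !puE; field; exact: lt0r_neq0 (S_gt0 _).
  have beE : be = wL u * wL u2 / S 1 ^+ 2 * S 2.
    rewrite /be -[S 2]/(\sum_z wR z ^+ 2) big_distrr /=; apply: eq_bigr => y _.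
    rewrite /pu /pu2 !puE; field; exact: lt0r_neq0 (S_gt0 _).
  rewrite taE alE beE !momentE.
  have := S_gt0 1; have := S_gt0 2; have := S_gt0 3; have := nR_gt0.
  have := wLp u; have := wLp u1; have := wLp u2.
  move: (S 1) (S 2) (S 3) (nR%:R : R) (wL u) (wL u1) (wL u2) => s1 s2 s3 n a b c.
  move=> c0 b0 a0 n0' s30 s20 s10.
  have h1 : s1 != 0 by exact: lt0r_neq0.
  have h2 : s2 != 0 by exact: lt0r_neq0.
  have h3 : s3 != 0 by exact: lt0r_neq0.
  have hn : n != 0 by exact: lt0r_neq0.
  have ha' : a != 0 by exact: lt0r_neq0.
  have hb' : b != 0 by exact: lt0r_neq0.
  have hc' : c != 0 by exact: lt0r_neq0.
  have hd : 1 + (n^-1 * s2) ^+ 2 / (n^-1 * s3 * (n^-1 * s1)) * a != 0.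
    apply: lt0r_neq0.
    suff : 0 <= (n^-1 * s2) ^+ 2 / (n^-1 * s3 * (n^-1 * s1)) * a by lra.
    apply: mulr_ge0; last exact: ltW.
    apply: divr_ge0; first exact: sqr_ge0.
    by apply: mulr_ge0; apply: mulr_ge0; rewrite ?invr_ge0; apply: ltW.
  have hd2 : a * b * c / s1 ^+ 3 * s3 + a * b / s1 ^+ 2 * s2 * (a * c / s1 ^+ 2 * s2) != 0.
    apply: lt0r_neq0.
    have t1 : 0 < a * b * c / s1 ^+ 3 * s3.
      by apply: mulr_gt0 => //; apply: divr_gt0; [apply: mulr_gt0; [apply: mulr_gt0|]|apply: exprn_gt0].
    have t2 : 0 < a * b / s1 ^+ 2 * s2 * (a * c / s1 ^+ 2 * s2).
      by apply: mulr_gt0; apply: mulr_gt0 => //; apply: divr_gt0; try apply: mulr_gt0; try apply: exprn_gt0.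
    lra.
  field.
  rewrite h1 hn h3 /=; apply/andP; split; apply: lt0r_neq0;
    apply: addr_gt0; repeat (apply: mulr_gt0 || apply: exprn_gt0); done.
rewrite Ec Et (prob_AB wL wR hu1 hu2 h12).
have P01 := ep01.
have t0 : 0 < ta.
  rewrite /ta (bigD1 (Ordinal n0)) //=; apply: ltr_pwDl.
    by apply: mulr_gt0; [apply: mulr_gt0|]; apply: pu_gt0.
  by apply: sumr_ge0 => z _; apply: mulr_ge0; [apply: mulr_ge0|]; apply: ep_ge0.
have e2 : eta ^+ 2 <= eta / 8 by rewrite expr2; nra.
apply: le_trans (final_prod (p := pu wL wR u) (q := pu1 wL wR u1) (r := pu2 wL wR u2)
   (m := eta) _ _ _ hp _ t0 _ _) _.
- by move=> z; exact: P01.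
- by move=> z; exact: P01.
- by move=> z; exact: P01.
- exact: ltW.
- lra.
- rewrite -(prob_T wL wR hu1 hu2 h12); apply/andP; split.
    exact: (N_ge u u1 u2 wLge0 wRge0).
  exact: (N_le hu1 hu2 h12 wLge0 wRge0).
- lra.
Qed.

End Fixed.

Section Pow.
Variable R : realType.

Lemma rho_sq (n d : R) : 0 < n -> (n `^ (1/2 - d)) ^+ 2 / n = (n `^ (2 * d))^-1.
Proof.
move=> n0.
rewrite -powR_mulrn ?powR_ge0 // -powRrM.
rewrite (_ : (1/2 - d) * 2%:R = 1 + - (2 * d)); last by rewrite mulrBl; field.
rewrite powRD; last by rewrite (lt0r_neq0 n0) implybT.
rewrite powRr1 ?ltW // powRN; field.
by apply/andP; split; apply: lt0r_neq0; [apply: powR_gt0|].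
Qed.

Lemma pow_large (d Q : R) : 0 < d -> 0 < Q ->
  exists M : nat, forall n : nat, (M <= n)%N -> Q <= n%:R `^ d.
Proof.
move=> d0 Q0; set X := Q `^ d^-1.
have X0 : 0 <= X by exact: powR_ge0.
exists (Num.Def.archi_bound X) => n hn.
have hX : X <= n%:R.
  apply: le_trans (ltW (archi_boundP X0)) _; by rewrite ler_nat.
have : X `^ d <= n%:R `^ d.
  by apply: ge0_ler_powR => //; rewrite ?nnegrE ?ler0n //; apply: ltW.
by rewrite /X -powRrM mulVf ?(lt0r_neq0 d0) // powRr1 // ltW.
Qed.

End Pow.

Section Bounds.
Variables (R : realType) (nL nR : nat) (wL : 'I_nL -> R) (wR : 'I_nR -> R).
Hypotheses (n0 : (0 < nR)%N) (wLp : forall i, 0 < wL i) (wRp : forall j, 0 < wR j).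
Hypothesis (As1 : forall i j, wL i * wR j / (nR%:R * moment wR 1) <= 1).

Lemma S2_bound C2 : moment wR 2 <= C2 * moment wR 1 ^+ 2 ->
  S wR 2 / S wR 1 ^+ 2 <= C2 / nR%:R.
Proof.
rewrite !momentE => h.
have nn := nR_gt0 R n0; have s1 := S_gt0 n0 wRp 1.
move: h; move: (S wR 1) (S wR 2) (nR%:R : R) nn s1 => a b n nn s1 h.
have k : n^-1 * b * (n / a ^+ 2) <= C2 * (n^-1 * a) ^+ 2 * (n / a ^+ 2).
  apply: ler_wpM2r => //; apply: divr_ge0; [exact: ltW | apply: exprn_ge0; exact: ltW].
rewrite (_ : n^-1 * b * (n / a ^+ 2) = b / a ^+ 2) in k; last first.
  by field; apply/andP; split; apply: lt0r_neq0.
rewrite (_ : C2 * (n^-1 * a) ^+ 2 * (n / a ^+ 2) = C2 / n) in k => //.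
by field; apply/andP; split; apply: lt0r_neq0.
Qed.

Lemma sum_bound (v v' : 'I_nL) B D : wL v * wL v' <= B ->
  S wR 2 / S wR 1 ^+ 2 <= D ->
  \sum_z edge_prob wL wR (v, z) * edge_prob wL wR (v', z) <= B * D.
Proof.
move=> hB hD.
have s1 := S_gt0 n0 wRp 1.
rewrite (eq_bigr (fun z => wL v * wL v' / S wR 1 ^+ 2 * wR z ^+ 2)); last first.
  move=> z _; rewrite !(puE n0 As1); field; exact: lt0r_neq0.
rewrite -big_distrr /= -[\sum_z wR z ^+ 2]/(S wR 2).
have -> : wL v * wL v' / S wR 1 ^+ 2 * S wR 2 = wL v * wL v' * (S wR 2 / S wR 1 ^+ 2).
  by rewrite mulrA -[_ / _ * _]mulrA [_^-1 * _]mulrC mulrA.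
apply: ler_pM => //.
- by apply: mulr_ge0; apply: ltW.
- apply: divr_ge0; [exact: ltW (S_gt0 n0 wRp 2) | apply: exprn_ge0; exact: ltW].
Qed.

Lemma p_bound (v : 'I_nL) z B D : wL v ^+ 2 <= B ->
  S wR 2 / S wR 1 ^+ 2 <= D -> edge_prob wL wR (v, z) ^+ 2 <= B * D.
Proof.
move=> hB hD.
have s1 := S_gt0 n0 wRp 1.
have hz : wR z ^+ 2 <= S wR 2.
  rewrite /S (bigD1 z) //= -[X in X <= _]addr0 lerD2l.
  by apply: sumr_ge0 => i _; apply: exprn_ge0; exact: ltW.
rewrite (puE n0 As1).
have -> : (wL v * wR z / S wR 1) ^+ 2 = wL v ^+ 2 * (wR z ^+ 2 / S wR 1 ^+ 2).
  by field; exact: lt0r_neq0.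
apply: ler_pM => //.
- apply: exprn_ge0; exact: ltW (wLp v).
- apply: divr_ge0; apply: exprn_ge0; [exact: ltW (wRp z) | exact: ltW].
apply: le_trans hD; apply: ler_wpM2r => //.
by rewrite invr_ge0; apply: exprn_ge0; exact: ltW.
Qed.

End Bounds.
Unset Implicit Arguments.

Theorem mainTheorem9 (R : realType) (delta : R)
  (nL nR : nat -> nat)
  (wL : forall N : nat, 'I_(nL N) -> R) (wR : forall N : nat, 'I_(nR N) -> R)
  (u u1 u2 : forall N : nat, 'I_(nL N)) :
  (* delta > 1/10 *)
  1 / 10 < delta ->
  (* n_L, n_R -> oo *)
  (forall M : nat, exists N0 : nat, forall N : nat, (N0 <= N)%N -> (M <= nL N)%N) ->
  (forall M : nat, exists N0 : nat, forall N : nat, (N0 <= N)%N -> (M <= nR N)%N) ->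
  (* weights are positive reals *)
  (forall N (i : 'I_(nL N)), 0 < wL N i) ->
  (forall N (j : 'I_(nR N)), 0 < wR N j) ->
  (* Assumption 1 *)
  (forall N (i : 'I_(nL N)) (j : 'I_(nR N)),
     wL N i * wR N j / ((nR N)%:R * moment (wR N) 1) <= 1) ->
  (* Assumption 2: max (S_L u S_R) = O(n_R^(1/2 - delta)) *)
  (exists C : R, exists N0 : nat, 0 < C /\ forall N : nat, (N0 <= N)%N ->
     (forall i : 'I_(nL N), wL N i <= C * ((nR N)%:R `^ (1 / 2 - delta))) /\
     (forall j : 'I_(nR N), wR N j <= C * ((nR N)%:R `^ (1 / 2 - delta)))) ->
  (* min S_L = Omega(1) *)
  (exists c : R, exists N0 : nat, 0 < c /\ forall N : nat, (N0 <= N)%N ->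
     forall i : 'I_(nL N), c <= wL N i) ->
  (* M_R2 = O(M_R1^2) *)
  (exists C : R, exists N0 : nat, 0 < C /\ forall N : nat, (N0 <= N)%N ->
     moment (wR N) 2 <= C * moment (wR N) 1 ^+ 2) ->
  (* M_R4 = O(n_R^(1 - 2 delta)) *)
  (exists C : R, exists N0 : nat, 0 < C /\ forall N : nat, (N0 <= N)%N ->
     moment (wR N) 4 <= C * ((nR N)%:R `^ (1 - 2 * delta))) ->
  (* u, u1, u2 distinct *)
  (forall N, u N != u1 N /\ u N != u2 N /\ u1 N != u2 N) ->
  (fun N : nat =>
     cond_prob (wL N) (wR N)
       (fun g => proj_edge g (u1 N) (u2 N))
       (fun g => proj_edge g (u N) (u1 N) && proj_edge g (u N) (u2 N))
     - (1 + moment (wR N) 2 ^+ 2 / (moment (wR N) 3 * moment (wR N) 1) * wL N (u N))^-1)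
  @ \oo --> (0 : R).
Proof.
move=> hdelta hL hR wLp wRp As1 [C [N1 [C0 HC]]] _ [C2 [N3 [C20 HC2]]] _ hdist.
apply/cvgrPdist_le => e e0.
set eta := Num.min (e / 12) (1/8).
have eta0 : 0 < eta by rewrite /eta lt_min; apply/andP; split; lra.
have eta1 : eta <= 1/8 by rewrite /eta ge_min lexx orbT.
have eta2 : eta <= e/12 by rewrite /eta ge_min lexx.
set K := C ^+ 2 * C2.
have K0 : 0 < K by apply: mulr_gt0 => //; apply: exprn_gt0.
have [M HM] := @pow_large R (2 * delta) (K / eta ^+ 2) ltac:(lra)
  ltac:(by apply: divr_gt0 => //; apply: exprn_gt0).
have [N4 HN4] := hR M.+1.
exists (maxn N1 (maxn N3 N4)) => // N /=; rewrite !geq_max => /and3P[h1 h3 h4].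
rewrite sub0r normrN.
have n0 : (0 < nR N)%N by apply: leq_trans (HN4 N h4).
have hMn : (M <= nR N)%N by apply: ltnW; apply: (HN4 N h4).
have [hu1 [hu2 h12]] := hdist N.
have [HCL HCR] := HC N h1.
have hS := S2_bound n0 (wRp N) (HC2 N h3).
set n := (nR N)%:R : R.
have nn : 0 < n by rewrite /n ltr0n.
set rho := n `^ (1 / 2 - delta).
have rho0 : 0 <= rho by exact: powR_ge0.
have hKP : K * (rho ^+ 2 / n) <= eta ^+ 2.
  rewrite /rho rho_sq //.
  have hP := HM (nR N) hMn.
  have P0 : 0 < n `^ (2 * delta) by apply: powR_gt0.
  rewrite -/n in hP.
  rewrite -[K * _]/(K / n `^ (2 * delta)) ler_pdivrMr //.
  move: hP; rewrite ler_pdivrMr; last by apply: exprn_gt0.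
  by rewrite mulrC.
have hBD (a b : R) : 0 < a -> 0 < b -> a <= C * rho -> b <= C * rho ->
    a * b * (C2 / n) <= eta ^+ 2.
  move=> a0 b0 ha hb; apply: le_trans hKP.
  have : a * b <= C * rho * (C * rho) by apply: ler_pM => //; apply: ltW.
  move=> hab.
  have -> : K * (rho ^+ 2 / n) = C * rho * (C * rho) * (C2 / n) by rewrite /K; field; exact: lt0r_neq0.
  apply: ler_wpM2r => //; apply: divr_ge0; [exact: ltW | exact: ltW].
apply: le_trans (fixedN hu1 hu2 h12 n0 (wLp N) (wRp N) (As1 N) eta0 eta1 _ _ _ _) _.
- move=> z.
  have hp2 : edge_prob (wL N) (wR N) (u N, z) ^+ 2 <= eta ^+ 2.
    apply: le_trans (p_bound n0 (wLp N) (wRp N) (As1 N) z _ hS) _.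
      by apply: lexx.
    by rewrite expr2; apply: (hBD (wL N (u N)) (wL N (u N))).
  have p0 : 0 <= edge_prob (wL N) (wR N) (u N, z) by apply: ep_ge0 => i; apply: ltW.
  rewrite /pu; nra.
- rewrite /pu /pu1 /pu2; apply: le_trans (sum_bound n0 (wLp N) (wRp N) (As1 N) (lexx (wL N (u N) * wL N (u1 N))) hS) _.
  by apply: hBD.
- rewrite /pu /pu1 /pu2; apply: le_trans (sum_bound n0 (wLp N) (wRp N) (As1 N) (lexx (wL N (u N) * wL N (u2 N))) hS) _.
  by apply: hBD.
- rewrite /pu /pu1 /pu2; apply: le_trans (sum_bound n0 (wLp N) (wRp N) (As1 N) (lexx (wL N (u1 N) * wL N (u2 N))) hS) _.
  by apply: hBD.
lra.
Qed.
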